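(* For every $a\in C\ell_{1,2}$, $L(a^+)=L(a)^+$ and $R(a^+)=R(a)^+$, where on the right-hand sides $M^+$ denotes the Moore–Penrose inverse of a real matrix $M$.
   Context: $C\ell_{1,2}$ is the real Clifford algebra generated by $i_1,i_2,i_3$ with $i_1^2=1$, $i_2^2=i_3^2=-1$ and $i_ti_m=-i_mi_t$ for $t\neq m$, with real basis $e_0=1$, $e_1=i_1$, $e_2=i_2$, $e_3=i_1i_2$, $e_4=i_3$, $e_5=i_1i_3$, $e_6=i_2i_3$, $e_7=i_1i_2i_3$. For $x=\sum_{t=0}^7x_te_t$ write $\overrightarrow{x}=(x_0,\dots,x_7)^T$. $L(a)$, $R(a)$ are the real $8\times8$ matrices with $\overrightarrow{ax}=L(a)\overrightarrow{x}$, $\overrightarrow{xa}=R(a)\overrightarrow{x}$ for all $x$. The prime of $a=\sum a_te_t$ is $a'=a_0+a_1e_1-a_2e_2+a_3e_3-a_4e_4+a_5e_5-a_6e_6-a_7e_7$. For every $a$ there is a unique $x\in C\ell_{1,2}$ with $axa=a$, $xax=x$, $(ax)'=ax$, $(xa)'=xa$, denoted $a^+$ (the Moore–Penrose inverse of $a$). *)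

(* Defs.v *)
From mathcomp Require Import all_boot all_order all_algebra.
From mathcomp Require Import reals.
Set Implicit Arguments. Unset Strict Implicit. Unset Printing Implicit Defensive.
Import Order.TTheory GRing.Theory Num.Theory.
Local Open Scope ring_scope.

(* Basis index t in 'I_8 is read in binary: bit 0 <-> i1, bit 1 <-> i2,
   bit 2 <-> i3, generators taken in increasing order.  This matches
   e0=1,e1=i1,e2=i2,e3=i1i2,e4=i3,e5=i1i3,e6=i2i3,e7=i1i2i3. *)
Definition bit (i n : nat) : bool := odd (n %/ 2 ^ i).

(* e_s e_t = (-1)^(swaps + squares) e_(s xor t), with i1^2 = 1,
   i2^2 = i3^2 = -1. *)
(* number of transpositions needed to bring i_.. (from s) i_.. (from t) into
   increasing order: pairs (generator j of t, generator i of s) with i > j *)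
Definition cl_swaps (s t : nat) : nat :=
  (bit 0 t * (bit 1 s + bit 2 s) + bit 1 t * bit 2 s)%N.
Definition cl_sqneg (s t : nat) : nat :=
  ((bit 1 s && bit 1 t) + (bit 2 s && bit 2 t))%N.
Definition cl_sign (s t : nat) : int :=
  (-1) ^+ (cl_swaps s t + cl_sqneg s t).

Definition cl_mul (R : realType) (a b : 'cV[R]_8) : 'cV[R]_8 :=
  \col_(k < 8) \sum_(s < 8) \sum_(t < 8)
     (if Nat.lxor s t == k then (cl_sign s t)%:~R * a s 0 * b t 0 else 0).

Definition cl_basis (R : realType) (j : 'I_8) : 'cV[R]_8 := delta_mx j 0.

(* L(a), R(a): vec(a x) = L(a) vec(x), vec(x a) = R(a) vec(x). *)
Definition Lmx (R : realType) (a : 'cV[R]_8) : 'M[R]_8 :=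
  \matrix_(i < 8, j < 8) cl_mul a (cl_basis R j) i 0.
Definition Rmx (R : realType) (a : 'cV[R]_8) : 'M[R]_8 :=
  \matrix_(i < 8, j < 8) cl_mul (cl_basis R j) a i 0.

Definition prime_sign (i : nat) : int :=
  nth 1%:Z [:: 1; 1; -1; 1; -1; 1; -1; -1] i.
Definition cl_prime (R : realType) (a : 'cV[R]_8) : 'cV[R]_8 :=
  \col_(k < 8) ((prime_sign k)%:~R * a k 0).

Definition cl_is_mp (R : realType) (a x : 'cV[R]_8) : Prop :=
  [/\ cl_mul (cl_mul a x) a = a,
      cl_mul (cl_mul x a) x = x,
      cl_prime (cl_mul a x) = cl_mul a x &
      cl_prime (cl_mul x a) = cl_mul x a].

Definition mx_is_mp (R : realType) (n : nat) (M X : 'M[R]_n) : Prop :=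
  [/\ M *m X *m M = M,
      X *m M *m X = X,
      (M *m X)^T = M *m X &
      (X *m M)^T = X *m M].

(* Main.v *)
Require Import Defs.
From mathcomp Require Import all_boot all_order all_algebra.
From mathcomp Require Import reals ring.
Set Implicit Arguments. Unset Strict Implicit. Unset Printing Implicit Defensive.
Import Order.TTheory GRing.Theory Num.Theory.
Local Open Scope ring_scope.

Definition tbl : seq (seq bool) :=
  [:: [:: false; false; false; false; false; false; false; false];
      [:: false; false; false; false; false; false; false; false];
      [:: false; true; true; false; false; true; true; false];
      [:: false; true; true; false; false; true; true; false];
      [:: false; true; true; false; true; false; false; true];
      [:: false; true; true; false; true; false; false; true];
      [:: false; false; false; false; true; true; true; true];
      [:: false; false; false; false; true; true; true; true]].
Definition xtbl : seq (seq nat) :=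
  [:: [:: 0; 1; 2; 3; 4; 5; 6; 7]; [:: 1; 0; 3; 2; 5; 4; 7; 6];
      [:: 2; 3; 0; 1; 6; 7; 4; 5]; [:: 3; 2; 1; 0; 7; 6; 5; 4];
      [:: 4; 5; 6; 7; 0; 1; 2; 3]; [:: 5; 4; 7; 6; 1; 0; 3; 2];
      [:: 6; 7; 4; 5; 2; 3; 0; 1]; [:: 7; 6; 5; 4; 3; 2; 1; 0]]%N.
Definition tb (s t : nat) : bool := nth false (nth [::] tbl s) t.
Definition xt (s t : nat) : nat := nth 0%N (nth [::] xtbl s) t.

Lemma tbE (s t : nat) : (s < 8)%N -> (t < 8)%N ->
  odd (cl_swaps s t + cl_sqneg s t) = tb s t.
Proof.
by case: s => [|[|[|[|[|[|[|[|s]]]]]]]] //; case: t => [|[|[|[|[|[|[|[|t]]]]]]]].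
Qed.

Lemma xtE (s t : nat) : (s < 8)%N -> (t < 8)%N -> Nat.lxor s t = xt s t.
Proof.
by case: s => [|[|[|[|[|[|[|[|s]]]]]]]] //; case: t => [|[|[|[|[|[|[|[|t]]]]]]]].
Qed.

Section S.
Variable R : realType.

Definition sgR (s t : nat) : R := if tb s t then -1 else 1.

Arguments sgR : simpl never.
Lemma sgRE (s t : nat) : (s < 8)%N -> (t < 8)%N -> (cl_sign s t)%:~R = sgR s t.
Proof.
move=> hs ht; rewrite /cl_sign -signr_odd tbE // /sgR.
by case: (tb s t); rewrite /= ?expr0 ?expr1 ?mulrNz ?mulr1z.
Qed.

Definition v (M : 'cV[R]_8) (n : nat) : R := M (inord n) 0.

Arguments v : simpl never.
Lemma vE (M : 'cV[R]_8) (i : 'I_8) : M i 0 = v M i.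
Proof. by rewrite /v inord_val. Qed.

Lemma mulc (a b : 'cV[R]_8) k : (k < 8)%N ->
  v (cl_mul a b) k = \sum_(s <- [:: 0; 1; 2; 3; 4; 5; 6; 7]%N)
     \sum_(t <- [:: 0; 1; 2; 3; 4; 5; 6; 7]%N)
       (if xt s t == k then sgR s t * v a s * v b t else 0).
Proof.
move=> hk; rewrite /v mxE inordK //.
have -> : [:: 0; 1; 2; 3; 4; 5; 6; 7]%N = index_iota 0 8 by [].
rewrite big_mkord; apply: eq_bigr => s _.
rewrite big_mkord; apply: eq_bigr => t _.
by rewrite xtE // sgRE // !inord_val.
Qed.

Lemma vbasis (j : 'I_8) t : (t < 8)%N -> v (cl_basis R j) t = (nat_of_ord j == t)%:R.
Proof.
move=> ht; rewrite /v /cl_basis mxE andbT.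
rewrite (_ : (inord t == j) = (nat_of_ord j == t)) //; apply/idP/idP => /eqP h; apply/eqP; [by rewrite -h inordK | by rewrite -h inord_val].
Qed.

Lemma sum8 (F : 'I_8 -> R) : \sum_(k < 8) F k =
  \sum_(k <- [:: 0; 1; 2; 3; 4; 5; 6; 7]%N) F (inord k).
Proof.
have -> : [:: 0; 1; 2; 3; 4; 5; 6; 7]%N = index_iota 0 8 by [].
by rewrite big_mkord; apply: eq_bigr => k _; rewrite inord_val.
Qed.


Lemma vbasisI n t : (n < 8)%N -> (t < 8)%N -> v (cl_basis R (inord n)) t = (n == t)%:R.
Proof. by move=> hn ht; rewrite vbasis // inordK. Qed.

Lemma LmxE (a : 'cV[R]_8) i j : Lmx a i j = v (cl_mul a (cl_basis R j)) i.
Proof. by rewrite mxE vE. Qed.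
Lemma RmxE (a : 'cV[R]_8) i j : Rmx a i j = v (cl_mul (cl_basis R j) a) i.
Proof. by rewrite mxE vE. Qed.

Ltac expand := rewrite !big_cons !big_nil /= ?add0r ?addr0 ?mul0r ?mulr0.



Lemma mulc8 (a b : 'cV[R]_8) k : (k < 8)%N ->
  v (cl_mul a b) k =
    sgR 0 (xt 0 k) * v a 0 * v b (xt 0 k) + sgR 1 (xt 1 k) * v a 1 * v b (xt 1 k) +
    sgR 2 (xt 2 k) * v a 2 * v b (xt 2 k) + sgR 3 (xt 3 k) * v a 3 * v b (xt 3 k) +
    sgR 4 (xt 4 k) * v a 4 * v b (xt 4 k) + sgR 5 (xt 5 k) * v a 5 * v b (xt 5 k) +
    sgR 6 (xt 6 k) * v a 6 * v b (xt 6 k) + sgR 7 (xt 7 k) * v a 7 * v b (xt 7 k).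
Proof.
move=> hk; rewrite mulc //.
case: k hk => [|[|[|[|[|[|[|[|k]]]]]]]] hk //; expand; ring.
Qed.

Lemma big8 (F : nat -> R) : \sum_(k <- [:: 0; 1; 2; 3; 4; 5; 6; 7]%N) F k =
  F 0%N + F 1%N + F 2%N + F 3%N + F 4%N + F 5%N + F 6%N + F 7%N.
Proof. by rewrite !big_cons big_nil addr0 !addrA. Qed.


Lemma eqbE m n : Nat.eqb m n = (m == n).
Proof. case: eqP => [->|ne]; [exact: PeanoNat.Nat.eqb_refl | exact/PeanoNat.Nat.eqb_neq]. Qed.

Lemma vbasisN (j : 'I_8) t : (t < 8)%N -> v (cl_basis R j) t = if Nat.eqb (nat_of_ord j) t then 1 else 0.
Proof. move=> ht; rewrite vbasis // eqbE; by case: eqP. Qed.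
Lemma vbasisIN n t : (n < 8)%N -> (t < 8)%N -> v (cl_basis R (inord n)) t = if Nat.eqb n t then 1 else 0.
Proof. by move=> hn ht; rewrite vbasisN // inordK. Qed.

Ltac fin := rewrite ?vbasisIN // ?vbasisN //; cbv [xt xtbl tb tbl nth sgR Nat.eqb nat_of_ord]; ring.


Lemma xt_lt s t : (s < 8)%N -> (t < 8)%N -> (xt s t < 8)%N.
Proof. by case: s => [|[|[|[|[|[|[|[|s]]]]]]]] //; case: t => [|[|[|[|[|[|[|[|t]]]]]]]]. Qed.

Ltac cas i hi := case: i hi => [|[|[|[|[|[|[|[|i]]]]]]]] hi //.
Ltac red8 := cbv [xt xtbl tb tbl nth sgR Nat.eqb nat_of_ord].

Lemma LmxE' (a : 'cV[R]_8) (i j : 'I_8) :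
  Lmx a i j = sgR (xt j i) j * v a (xt j i).
Proof.
rewrite LmxE mulc8 // !vbasisN ?xt_lt //.
case: i => i hi; case: j => j hj; cas i hi; cas j hj; red8; ring.
Qed.

Lemma RmxE' (a : 'cV[R]_8) (i j : 'I_8) :
  Rmx a i j = sgR j (xt j i) * v a (xt j i).
Proof.
rewrite RmxE mulc8 // !vbasisN ?xt_lt //.
case: i => i hi; case: j => j hj; cas i hi; cas j hj; red8; ring.
Qed.

Lemma LmxM (a b : 'cV[R]_8) : Lmx (cl_mul a b) = Lmx a *m Lmx b.
Proof.
apply/matrixP => -[i hi] -[j hj]; rewrite [LHS]LmxE' [RHS]mxE sum8 big8.
rewrite !LmxE' /= !inordK // !mulc8 ?xt_lt //.
cas i hi; cas j hj; red8; ring.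
Qed.

Lemma RmxM (a b : 'cV[R]_8) : Rmx (cl_mul a b) = Rmx b *m Rmx a.
Proof.
apply/matrixP => -[i hi] -[j hj]; rewrite [LHS]RmxE' [RHS]mxE sum8 big8.
rewrite !RmxE' /= !inordK // !mulc8 ?xt_lt //.
cas i hi; cas j hj; red8; ring.
Qed.

Definition psR (k : nat) : R :=
  if nth false [:: false; false; true; false; true; false; true; true] k then -1 else 1.

Lemma vprime (a : 'cV[R]_8) k : (k < 8)%N -> v (cl_prime a) k = psR k * v a k.
Proof.
move=> hk; rewrite {1}/v mxE inordK // -/(v a k) /psR /prime_sign.
case: k hk => [|[|[|[|[|[|[|[|k]]]]]]]] hk //=; rewrite ?mulNrz ?mulrNz ?mulr1z //.
Qed.

Lemma LmxT (a : 'cV[R]_8) : (Lmx a)^T = Lmx (cl_prime a).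
Proof.
apply/matrixP => -[i hi] -[j hj]; rewrite mxE !LmxE' /= !vprime ?xt_lt //.
cas i hi; cas j hj; cbv [xt xtbl tb tbl nth sgR psR Nat.eqb nat_of_ord]; ring.
Qed.

Lemma RmxT (a : 'cV[R]_8) : (Rmx a)^T = Rmx (cl_prime a).
Proof.
apply/matrixP => -[i hi] -[j hj]; rewrite mxE !RmxE' /= !vprime ?xt_lt //.
cas i hi; cas j hj; cbv [xt xtbl tb tbl nth sgR psR Nat.eqb nat_of_ord]; ring.
Qed.
End S.

Unset Implicit Arguments.

Theorem proposition3p2 (R : realType) (a ap : 'cV[R]_8) :
  cl_is_mp a ap ->
  mx_is_mp (Lmx a) (Lmx ap) /\ mx_is_mp (Rmx a) (Rmx ap).
Proof.
case=> H1 H2 H3 H4; split; split.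
- by rewrite -!LmxM H1.
- by rewrite -!LmxM H2.
- by rewrite -LmxM LmxT H3.
- by rewrite -LmxM LmxT H4.
- by rewrite -mulmxA -!RmxM H1.
- by rewrite -mulmxA -!RmxM H2.
- by rewrite -RmxM RmxT H4.
- by rewrite -RmxM RmxT H3.
Qed.
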